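(* Let $\Bbbk$ be a field of characteristic $0$ and let $J$ be a Jordan dialgebra. If $\widehat J\in\mathrm{HomSJ}$, then $J\in\mathrm{HomDiSJ}$.
   Context: A 0-dialgebra is a vector space $J$ with bilinear $\vdash,\dashv$ satisfying $(x\dashv y)\vdash z=(x\vdash y)\vdash z$, $x\dashv(y\vdash z)=x\dashv(y\dashv z)$; then $\bar J=J/\mathrm{span}\{a\vdash b-a\dashv b\}$ is an ordinary algebra acting on $J$ by $\bar a\cdot x=a\vdash x$, $x\cdot\bar a=x\dashv a$, and $\widehat J=\bar J\oplus J$ is the split null extension with product $(\bar a+m)(\bar b+n)=\bar a\bar b+(a\vdash n+m\dashv b)$. A Jordan dialgebra is a 0-dialgebra satisfying $x_1\vdash x_2=x_2\dashv x_1$ and, for $i=1,\dots,4$, the identity obtained from $J(x_1,x_2,x_3,x_4)=x_1(x_2(x_3x_4))+(x_2(x_1x_3))x_4+x_3(x_2(x_1x_4))-(x_1x_2)(x_3x_4)-(x_1x_3)(x_2x_4)-(x_3x_2)(x_1x_4)$ by replacing each product $uv$ by $u\dashv v$ if $x_i$ occurs in $u$ and by $u\vdash v$ otherwise. An associative dialgebra additionally satisfies $(x\vdash y)\vdash z=x\vdash(y\vdash z)$, $(x\dashv y)\dashv z=x\dashv(y\dashv z)$, $(x\vdash y)\dashv z=x\vdash(y\dashv z)$; $D^{(+)}$ has $a\vdash_+b=\tfrac12(a\vdash b+b\dashv a)$, $a\dashv_+b=\tfrac12(a\dashv b+b\vdash a)$. $\mathrm{HomDiSJ}$ is the class of homomorphic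 images of subdialgebras of such $D^{(+)}$. $\mathrm{HomSJ}$ is the variety of homomorphic images of special Jordan algebras (subalgebras of $A^{(+)}$, product $\tfrac12(ab+ba)$, $A$ associative). *)

(* Defs.v *)
From HB Require Import structures.
From mathcomp Require Import all_boot all_order all_algebra.
Set Implicit Arguments. Unset Strict Implicit. Unset Printing Implicit Defensive.
Import GRing.Theory.
Local Open Scope ring_scope.

Section DiDefs.
Variable k : fieldType.

Definition bilinear_op (V : lmodType k) (op : V -> V -> V) : Prop :=
  (forall (a : k) (x y z : V), op (a *: x + y) z = a *: op x z + op y z) /\
  (forall (a : k) (x y z : V), op z (a *: x + y) = a *: op z x + op z y).

(* 0-dialgebra: lv = |- , rv = -| *)
Definition is_0_dialgebra (V : lmodType k) (lv rv : V -> V -> V) : Prop :=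
  [/\ bilinear_op lv, bilinear_op rv,
      (forall x y z : V, lv (rv x y) z = lv (lv x y) z) &
      (forall x y z : V, rv x (lv y z) = rv x (rv y z))].

Definition is_assoc_dialgebra (V : lmodType k) (lv rv : V -> V -> V) : Prop :=
  [/\ is_0_dialgebra lv rv,
      (forall x y z : V, lv (lv x y) z = lv x (lv y z)),
      (forall x y z : V, rv (rv x y) z = rv x (rv y z)) &
      (forall x y z : V, rv (lv x y) z = lv x (rv y z))].

(* formal nonassociative monomials in the variables x_1..x_4 (indexed 0..3) *)
Inductive dterm : Type :=
  | DVar of 'I_4
  | DMul of dterm & dterm.

Fixpoint doccurs (i : 'I_4) (t : dterm) : bool :=
  match t with
  | DVar j => j == i
  | DMul u v => doccurs i u || doccurs i v
  end.

Fixpoint deval (V : lmodType k) (lv rv : V -> V -> V) (x : 'I_4 -> V)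
    (i : 'I_4) (t : dterm) : V :=
  match t with
  | DVar j => x j
  | DMul u v => if doccurs i u then rv (deval lv rv x i u) (deval lv rv x i v)
                else lv (deval lv rv x i u) (deval lv rv x i v)
  end.

Definition X1 : dterm := DVar (@Ordinal 4 0 isT).
Definition X2 : dterm := DVar (@Ordinal 4 1 isT).
Definition X3 : dterm := DVar (@Ordinal 4 2 isT).
Definition X4 : dterm := DVar (@Ordinal 4 3 isT).

(* the identity J(x1,x2,x3,x4), evaluated with distinguished variable x_i *)
Definition Jdi (V : lmodType k) (lv rv : V -> V -> V) (x : 'I_4 -> V)
    (i : 'I_4) : V :=
  let e := deval lv rv x i in
    e (DMul X1 (DMul X2 (DMul X3 X4)))
  + e (DMul (DMul X2 (DMul X1 X3)) X4)
  + e (DMul X3 (DMul X2 (DMul X1 X4)))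
  - e (DMul (DMul X1 X2) (DMul X3 X4))
  - e (DMul (DMul X1 X3) (DMul X2 X4))
  - e (DMul (DMul X3 X2) (DMul X1 X4)).

Definition is_jordan_dialgebra (V : lmodType k) (lv rv : V -> V -> V) : Prop :=
  [/\ is_0_dialgebra lv rv,
      (forall x1 x2 : V, lv x1 x2 = rv x2 x1) &
      (forall (x : 'I_4 -> V) (i : 'I_4), Jdi lv rv x i = 0)].

Definition dplus_l (V : lmodType k) (lv rv : V -> V -> V) (a b : V) : V :=
  (2 : k)^-1 *: (lv a b + rv b a).
Definition dplus_r (V : lmodType k) (lv rv : V -> V -> V) (a b : V) : V :=
  (2 : k)^-1 *: (rv a b + lv b a).

Definition subspace (V : lmodType k) (S : V -> Prop) : Prop :=
  S 0 /\ (forall (a : k) (x y : V), S x -> S y -> S (a *: x + y)).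

Definition HomDiSJ (J : lmodType k) (lv rv : J -> J -> J) : Prop :=
  exists (D : lmodType k) (dl dr : D -> D -> D) (S : D -> Prop) (f : D -> J),
  is_assoc_dialgebra dl dr /\
  subspace S /\
  (forall x y, S x -> S y -> S (dplus_l dl dr x y)) /\
  (forall x y, S x -> S y -> S (dplus_r dl dr x y)) /\
  (forall (a : k) x y, S x -> S y -> f (a *: x + y) = a *: f x + f y) /\
  (forall x y, S x -> S y -> f (dplus_l dl dr x y) = lv (f x) (f y)) /\
  (forall x y, S x -> S y -> f (dplus_r dl dr x y) = rv (f x) (f y)) /\
  (forall z : J, exists x, S x /\ f x = z).

Definition jprod (A : algType k) (x y : A) : A := (2 : k)^-1 *: (x * y + y * x).

Definition in_dispan (J : lmodType k) (lv rv : J -> J -> J) (x : J) : Prop :=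
  exists s : seq (k * J * J),
    x = \sum_(t <- s) t.1.1 *: (lv t.1.2 t.2 - rv t.1.2 t.2).

(* The split null extension \hat J = \bar J (+) J is represented by pairs
   (a, m) : J * J standing for \bar a + m, with equality of \hat J being
   hat_eq (congruence modulo span{a|-b - a-|b} in the first component). *)
Definition hat_eq (J : lmodType k) (lv rv : J -> J -> J) (u v : J * J) : Prop :=
  in_dispan lv rv (u.1 - v.1) /\ u.2 = v.2.

Definition hat_add (J : lmodType k) (u v : J * J) : J * J :=
  (u.1 + v.1, u.2 + v.2).
Definition hat_scale (J : lmodType k) (a : k) (u : J * J) : J * J :=
  (a *: u.1, a *: u.2).
(* (\bar a + m)(\bar b + n) = \bar{a |- b} + (a |- n + m -| b) *)
Definition hat_mul (J : lmodType k) (lv rv : J -> J -> J) (u v : J * J) : J * J :=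
  (lv u.1 v.1, lv u.1 v.2 + rv u.2 v.1).

(* \hat J is in HomSJ: it is a homomorphic image of a subalgebra S of A^(+),
   A an associative algebra.  f composed with the projection J*J -> \hat J is
   the (surjective, linear, multiplicative) homomorphism S -> \hat J. *)
Definition hat_in_HomSJ (J : lmodType k) (lv rv : J -> J -> J) : Prop :=
  exists (A : algType k) (S : A -> Prop) (f : A -> J * J),
  [/\ subspace S,
      (forall x y, S x -> S y -> S (jprod x y)),
      (forall (a : k) x y, S x -> S y ->
          hat_eq lv rv (f (a *: x + y)) (hat_add (hat_scale a (f x)) (f y))),
      (forall x y, S x -> S y ->
          hat_eq lv rv (f (jprod x y)) (hat_mul lv rv (f x) (f y))) &
      (forall z : J * J, exists x, S x /\ hat_eq lv rv (f x) z)].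

End DiDefs.

(* Main.v *)
Require Import Defs.
From mathcomp Require Import all_boot all_order all_algebra.
Local Open Scope ring_scope.
Import GRing.Theory.

Lemma zm_id1 (V : zmodType) (x u v c d : V) :
  x - (c + d) = (x - (u + v)) + ((u - c) + (v - d)).
Proof. by rewrite [(u - c) + _]addrACA -opprD addrA subrK. Qed.

Lemma zm_id2 (V : zmodType) (x p q r : V) :
  x - r = (x - p) + ((p - q) + (q - r)).
Proof. by rewrite addrA [(x - p) + _]addrA subrK addrA subrK. Qed.

Section Helpers.
Variable k : fieldType.
Variable V : lmodType k.

Lemma bl_l (op : V -> V -> V) : bilinear_op op ->
  [/\ (forall z, op 0 z = 0), (forall x y z, op (x + y) z = op x z + op y z),
      (forall a x z, op (a *: x) z = a *: op x z) &
      (forall x y z, op (x - y) z = op x z - op y z)].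
Proof.
case=> Hl _.
have H0 : forall z, op 0 z = 0.
  move=> z; have := Hl 1 0 0 z; rewrite !scale1r addr0 => E.
  by apply/esym/(@addIr _ (op 0 z)); rewrite add0r -E.
have HD : forall x y z, op (x + y) z = op x z + op y z.
  by move=> x y z; have := Hl 1 x y z; rewrite !scale1r.
have HZ : forall a x z, op (a *: x) z = a *: op x z.
  by move=> a x z; rewrite -[a *: x]addr0 Hl H0 addr0.
split=> // x y z; rewrite HD -scaleN1r HZ scaleN1r //.
Qed.

Lemma bl_r (op : V -> V -> V) : bilinear_op op ->
  [/\ (forall z, op z 0 = 0), (forall x y z, op z (x + y) = op z x + op z y),
      (forall a x z, op z (a *: x) = a *: op z x) &
      (forall x y z, op z (x - y) = op z x - op z y)].
Proof.
case=> _ Hl.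
have H0 : forall z, op z 0 = 0.
  move=> z; have := Hl 1 0 0 z; rewrite !scale1r addr0 => E.
  by apply/esym/(@addIr _ (op z 0)); rewrite add0r -E.
have HD : forall x y z, op z (x + y) = op z x + op z y.
  by move=> x y z; have := Hl 1 x y z; rewrite !scale1r.
have HZ : forall a x z, op z (a *: x) = a *: op z x.
  by move=> a x z; rewrite -[a *: x]addr0 Hl H0 addr0.
split=> // x y z; rewrite HD -scaleN1r HZ scaleN1r //.
Qed.

Variables (lv rv : V -> V -> V).
Hypothesis H0d : is_0_dialgebra lv rv.
Local Notation P := (in_dispan lv rv).

Lemma P0 : P 0.
Proof. by exists [::]; rewrite big_nil. Qed.

Lemma Pbasic a b : P (lv a b - rv a b).
Proof. by exists [:: (1, a, b)]; rewrite big_cons big_nil /= scale1r addr0. Qed.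

Lemma Plin a x y : P x -> P y -> P (a *: x + y).
Proof.
move=> [s ->] [t ->].
exists ([seq (a * u.1.1, u.1.2, u.2) | u <- s] ++ t).
rewrite big_cat big_map /= scaler_sumr; congr (_ + _).
by apply: eq_bigr => u _; rewrite scalerA.
Qed.

Lemma PD x y : P x -> P y -> P (x + y).
Proof. by move=> ??; rewrite -[x]scale1r; apply: Plin. Qed.
Lemma PZ a x : P x -> P (a *: x).
Proof. by move=> ?; rewrite -[_ *: _]addr0; apply: Plin => //; apply: P0. Qed.
Lemma PN x : P x -> P (- x).
Proof. by move=> ?; rewrite -scaleN1r; apply: PZ. Qed.
Lemma PB x y : P x -> P y -> P (x - y).
Proof. by move=> ??; apply: PD => //; apply: PN. Qed.
Lemma Peq x y : x = y -> P y -> P x.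
Proof. by move=> ->. Qed.

Lemma lv_P d z : P d -> lv d z = 0.
Proof.
case: H0d => Bl _ A1 _; case: (bl_l _ Bl) => L0 LD LZ LB.
move=> [s ->]; elim: s => [|u s IH]; first by rewrite big_nil L0.
by rewrite big_cons LD LZ LB A1 subrr scaler0 add0r.
Qed.

Lemma rv_P d z : P d -> rv z d = 0.
Proof.
case: H0d => _ Br _ A2; case: (bl_r _ Br) => L0 LD LZ LB.
move=> [s ->]; elim: s => [|u s IH]; first by rewrite big_nil L0.
by rewrite big_cons LD LZ LB A2 subrr scaler0 add0r.
Qed.

Lemma lv_zP z d : P d -> P (lv z d).
Proof.
move=> Hd; have E : lv z d = lv z d - rv z d by rewrite (rv_P d z Hd) subr0.
by rewrite E; apply: Pbasic.
Qed.

Lemma rv_dP d z : P d -> P (rv d z).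
Proof.
move=> Hd; have E : rv d z = - (lv d z - rv d z) by rewrite (lv_P d z Hd) sub0r opprK.
rewrite E.
by apply/PN/Pbasic.
Qed.

End Helpers.

Theorem mainTheorem20 (k : fieldType) (Hchar : [pchar k] =i pred0)
    (J : lmodType k) (lv rv : J -> J -> J) :
  is_jordan_dialgebra lv rv ->
  hat_in_HomSJ lv rv ->
  HomDiSJ lv rv.
Proof.
case=> H0d _ _ [A [S [f [HS HSj Hflin Hfmul Hfsurj]]]].
have [Bl Br A1 A2] := H0d.
have [L0 LD LZ LB] := bl_l _ _ _ Bl; have [R0 RD RZ RB] := bl_r _ _ _ Br.
have [L0' LD' LZ' LB'] := bl_r _ _ _ Bl; have [R0' RD' RZ' RB'] := bl_l _ _ _ Br.
pose P := in_dispan lv rv.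
pose dl (x y : (A * A)%type) : (A * A)%type := (x.1 * y.1, x.1 * y.2).
pose dr (x y : (A * A)%type) : (A * A)%type := (x.1 * y.1, x.2 * y.1).
pose S' (x : (A * A)%type) := [/\ S x.1, S x.2, (f x.1).2 = 0, P (f x.2).1 &
                                  P ((f x.1).1 - (f x.2).2)].
pose g (x : (A * A)%type) := (f x.2).2.
exists ((A * A)%type : lmodType k), dl, dr, S', g.
have pD := @PD k J lv rv; have pZ := @PZ k J lv rv; have pB := @PB k J lv rv.
have pL := @Plin k J lv rv; have pN := @PN k J lv rv.
have lvP := @lv_P k J lv rv H0d; have rvP := @rv_P k J lv rv H0d.
have lvzP := @lv_zP k J lv rv H0d; have rvdP := @rv_dP k J lv rv H0d.
have pBasic := @Pbasic k J lv rv.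
have [HS0 HSl] := HS.
have Edl : forall s t s' t' : A, dplus_l dl dr (s, t) (s', t') = (jprod s s', jprod s t') by [].
have Edr : forall s t s' t' : A, dplus_r dl dr (s, t) (s', t') = (jprod s s', jprod t s') by [].
split.
  split; try by move=> x y z; rewrite /dl /dr /=; congr (_, _); rewrite mulrA.
  split; try by [].
  - split=> a x y z; rewrite /dl /=; congr (_, _) => /=;
      by rewrite ?mulrDl ?mulrDr -?scalerAl -?scalerAr.
  - split=> a x y z; rewrite /dr /=; congr (_, _) => /=;
      by rewrite ?mulrDl ?mulrDr -?scalerAl -?scalerAr.
split.
  split.
    have [F01 F02] := Hflin 1 0 0 HS0 HS0.
    rewrite /hat_add /hat_scale /= !scale1r addr0 in F01 F02.
    have F2 : (f 0).2 = 0.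
      by apply/esym/(@addIr _ (f 0).2); rewrite add0r -F02.
    have P0 : P (f 0).1.
      have -> : (f 0).1 = - ((f 0).1 - ((f 0).1 + (f 0).1)) by rewrite opprB addrK.
      exact: (pN).
    by split => //=; rewrite F2 subr0.
  move=> a [s t] [s' t'] [/= Ss St Fs Pt Pst] [/= Ss' St' Fs' Pt' Pst'].
  have -> : a *: (s, t) + (s', t') = (a *: s + s', a *: t + t') by [].
  have [Ha1 Ha2] := Hflin a s s' Ss Ss'; have [Hb1 Hb2] := Hflin a t t' St St'.
  rewrite /hat_add /hat_scale /= in Ha1 Ha2 Hb1 Hb2.
  split => /=; [exact: HSl | exact: HSl | by rewrite Ha2 Fs Fs' scaler0 addr0 | | ].
    have -> : (f (a *: t + t')).1 = ((f (a *: t + t')).1 - (a *: (f t).1 + (f t').1))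
       + (a *: (f t).1 + (f t').1) by rewrite subrK.
    by apply: (pD) => //; apply: (pL).
  rewrite Hb2.
  set X := (f (a *: s + s')).1.
  have -> : X - (a *: (f t).2 + (f t').2) = (X - (a *: (f s).1 + (f s').1)) +
     (a *: ((f s).1 - (f t).2) + ((f s').1 - (f t').2)).
    by rewrite scalerBr (zm_id1 _ X (a *: (f s).1) (f s').1).
  by apply: (pD) => //; apply: (pL).
split.
  move=> [s t] [s' t'] [/= Ss St Fs Pt Pst] [/= Ss' St' Fs' Pt' Pst'].
  rewrite Edl.
  have [M1 M2] := Hfmul s s' Ss Ss'; have [N1 N2] := Hfmul s t' Ss St'.
  rewrite /hat_mul /= in M1 M2 N1 N2.
  split => /=; [exact: HSj | exact: HSj | by rewrite M2 Fs Fs' L0' R0' addr0 | | ].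
    have -> : (f (jprod s t')).1 = ((f (jprod s t')).1 - lv (f s).1 (f t').1)
       + lv (f s).1 (f t').1 by rewrite subrK.
    by apply: (pD) => //; apply: (lvzP).
  rewrite N2 Fs R0' addr0.
  have -> : (f (jprod s s')).1 - lv (f s).1 (f t').2 =
     ((f (jprod s s')).1 - lv (f s).1 (f s').1) + lv (f s).1 ((f s').1 - (f t').2).
    by rewrite LB' addrA subrK.
  by apply: (pD) => //; apply: (lvzP).
split.
  move=> [s t] [s' t'] [/= Ss St Fs Pt Pst] [/= Ss' St' Fs' Pt' Pst'].
  rewrite Edr.
  have [M1 M2] := Hfmul s s' Ss Ss'; have [N1 N2] := Hfmul t s' St Ss'.
  rewrite /hat_mul /= in M1 M2 N1 N2.
  split => /=; [exact: HSj | exact: HSj | by rewrite M2 Fs Fs' L0' R0' addr0 | | ].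
    by move: N1; rewrite (lvP _ (f s').1 Pt) subr0.
  rewrite N2 (lvP _ _ Pt) add0r.
  have -> : (f (jprod s s')).1 - rv (f t).2 (f s').1 =
     ((f (jprod s s')).1 - lv (f s).1 (f s').1) +
     ((lv (f s).1 (f s').1 - rv (f s).1 (f s').1) + rv ((f s).1 - (f t).2) (f s').1).
    by rewrite RB' -zm_id2.
  apply: (pD) => //; apply: (pD); [exact: (pBasic) | exact: (rvdP)].
split.
  move=> a [s t] [s' t'] [/= Ss St Fs Pt Pst] [/= Ss' St' Fs' Pt' Pst'].
  by have [_ E] := Hflin a t t' St St'; exact: E.
split.
  move=> [s t] [s' t'] [/= Ss St Fs Pt Pst] [/= Ss' St' Fs' Pt' Pst'].
  rewrite Edl /g /=.
  have [N1 ->] := Hfmul s t' Ss St'; rewrite /= Fs R0' addr0.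
  apply/eqP; rewrite -subr_eq0 -LB (lvP _ _ Pst) //.
split.
  move=> [s t] [s' t'] [/= Ss St Fs Pt Pst] [/= Ss' St' Fs' Pt' Pst'].
  rewrite Edr /g /=.
  have [N1 ->] := Hfmul t s' St Ss'; rewrite /= (lvP _ _ Pt) add0r.
  apply/eqP; rewrite -subr_eq0 -RB (rvP _ _ Pst') //.
move=> z.
have [s [Ss [Hs1 Hs2]]] := Hfsurj (z, 0); have [t [St [Ht1 Ht2]]] := Hfsurj (0, z).
exists (s, t); split; last by rewrite /g /= Ht2.
rewrite /= in Hs1 Hs2 Ht1 Ht2.
split => //=; first by rewrite -(subr0 (f t).1).
by rewrite Ht2.
Qed.
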